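(* Let $R=\prod_{i=1}^nR_i$ be a direct product of left localization maximal rings $R_1,\ldots,R_n$. Then every nonzero element of $R$ is left localizable if and only if $R_1,\ldots,R_n$ are division rings.
   Context: All rings are associative with $1$. A multiplicative subset $S$ of $R$ ($1\in S$, $0\notin S$, closed under multiplication) is a left Ore set if $Sr\cap Rs\neq\emptyset$ for all $r\in R$, $s\in S$; for it, $\mathrm{ass}(S):=\{r\in R: sr=0\text{ for some } s\in S\}$. A left Ore set $S$ is a left denominator set if $rs=0$ ($r\in R$, $s\in S$) implies $tr=0$ for some $t\in S$; $\mathrm{Den}_l(R)$ denotes the set of left denominator sets. An element $r\in R$ is left localizable if $r\in S$ for some $S\in\mathrm{Den}_l(R)$. For a ring $A$, $S_0(A)$ is the largest left Ore set of $A$ consisting of regular elements and $Q_l(A):=S_0(A)^{-1}A$. A ring $A$ is a left localization maximal ring if $A=Q_l(A)$ (i.e. $S_0(A)$ consists of units) and $\{\mathrm{ass}(S):S\in\mathrm{Den}_l(A)\}=\{0\}$. *)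

(* Defs.v *)
From HB Require Import structures.
From mathcomp Require Import all_boot all_order all_algebra.
Set Implicit Arguments. Unset Strict Implicit. Unset Printing Implicit Defensive.
Import GRing.Theory.
Local Open Scope ring_scope.

Section ProdRing.
Variables (n : nat) (R : 'I_n -> pzRingType).

Definition prod_ring := {dffun forall i : 'I_n, R i : choiceType}.
HB.instance Definition _ := Choice.copy prod_ring {dffun forall i : 'I_n, R i : choiceType}.

Definition prod_zero : prod_ring := [ffun i => 0].
Definition prod_one : prod_ring := [ffun i => 1].
Definition prod_add (x y : prod_ring) : prod_ring := [ffun i => x i + y i].
Definition prod_opp (x : prod_ring) : prod_ring := [ffun i => - x i].
Definition prod_mul (x y : prod_ring) : prod_ring := [ffun i => x i * y i].

Lemma prod_addA : associative prod_add.
Proof. by move=> x y z; apply/ffunP=> i; rewrite !ffunE addrA. Qed.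
Lemma prod_addC : commutative prod_add.
Proof. by move=> x y; apply/ffunP=> i; rewrite !ffunE addrC. Qed.
Lemma prod_add0 : left_id prod_zero prod_add.
Proof. by move=> x; apply/ffunP=> i; rewrite !ffunE add0r. Qed.
Lemma prod_addN : left_inverse prod_zero prod_opp prod_add.
Proof. by move=> x; apply/ffunP=> i; rewrite !ffunE addNr. Qed.

HB.instance Definition _ := GRing.isZmodule.Build prod_ring
  prod_addA prod_addC prod_add0 prod_addN.

Lemma prod_mulA : associative prod_mul.
Proof. by move=> x y z; apply/ffunP=> i; rewrite !ffunE mulrA. Qed.
Lemma prod_mul1 : left_id prod_one prod_mul.
Proof. by move=> x; apply/ffunP=> i; rewrite !ffunE mul1r. Qed.
Lemma prod_mulr1 : right_id prod_one prod_mul.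
Proof. by move=> x; apply/ffunP=> i; rewrite !ffunE mulr1. Qed.
Lemma prod_mulDl : left_distributive prod_mul prod_add.
Proof. by move=> x y z; apply/ffunP=> i; rewrite !ffunE mulrDl. Qed.
Lemma prod_mulDr : right_distributive prod_mul prod_add.
Proof. by move=> x y z; apply/ffunP=> i; rewrite !ffunE mulrDr. Qed.

HB.instance Definition _ := GRing.Zmodule_isPzRing.Build prod_ring
  prod_mulA prod_mul1 prod_mulr1 prod_mulDl prod_mulDr.

Lemma prod_ringE (x y : prod_ring) (i : 'I_n) :
  [/\ (x * y) i = x i * y i, (x + y) i = x i + y i,
      (0 : prod_ring) i = 0 & (1 : prod_ring) i = 1].
Proof. by rewrite /GRing.mul /GRing.add /= !ffunE. Qed.

End ProdRing.

Section Loc.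
Variable A : pzRingType.

(* two-sided unit, without requiring a unitRingType structure *)
Definition is_unit (x : A) : Prop := exists y : A, x * y = 1 /\ y * x = 1.

Definition regular (x : A) : Prop :=
  (forall y : A, x * y = 0 -> y = 0) /\ (forall y : A, y * x = 0 -> y = 0).

Definition multiplicative (S : A -> Prop) : Prop :=
  [/\ S 1, ~ S 0 & forall s t, S s -> S t -> S (s * t)].

Definition left_ore (S : A -> Prop) : Prop :=
  multiplicative S /\
  forall (r s : A), S s -> exists s' r' : A, S s' /\ s' * r = r' * s.

Definition ass (S : A -> Prop) : A -> Prop :=
  fun r => exists s, S s /\ s * r = 0.

Definition left_denominator (S : A -> Prop) : Prop :=
  left_ore S /\
  forall (r s : A), S s -> r * s = 0 -> exists t, S t /\ t * r = 0.

Definition left_localizable (r : A) : Prop :=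
  exists S : A -> Prop, left_denominator S /\ S r.

(* S_0(A): the largest left Ore set consisting of regular elements,
   i.e. the union of all left Ore sets consisting of regular elements. *)
Definition S0 : A -> Prop :=
  fun r => exists S : A -> Prop,
    [/\ left_ore S, (forall s, S s -> regular s) & S r].

(* A is a left localization maximal ring: A = Q_l(A) (S_0(A) consists of units)
   and {ass(S) : S ∈ Den_l(A)} = {0}. *)
Definition left_loc_maximal : Prop :=
  (forall s, S0 s -> is_unit s) /\
  (forall S, left_denominator S -> forall r, ass S r <-> r = 0).

Definition division_ring : Prop :=
  (1 : A) <> 0 /\ forall x : A, x <> 0 -> is_unit x.

End Loc.

(* Main.v *)
Require Import Defs.
From HB Require Import structures.
From mathcomp Require Import all_boot all_order all_algebra.
Local Open Scope ring_scope.
Import GRing.Theory.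

Section Helpers.
Variables (n : nat) (R : 'I_n -> nzRingType).

Lemma pmulE (x y : prod_ring R) j : (x * y) j = x j * y j.
Proof. by case: (prod_ringE x y j). Qed.
Lemma p0E j : (0 : prod_ring R) j = 0.
Proof. by case: (prod_ringE (0 : prod_ring R) 0 j). Qed.
Lemma p1E j : (1 : prod_ring R) j = 1.
Proof. by case: (prod_ringE (0 : prod_ring R) 0 j). Qed.

Lemma pext (x y : prod_ring R) : (forall j, x j = y j) -> x = y.
Proof. by move=> H; apply/ffunP. Qed.

Definition plift {i} (a : R i) : prod_ring R :=
  [ffun j => @dfwith _ R (fun k => 0 : R k) i a j].

Lemma lift_in i (a : R i) : plift a i = a.
Proof. by rewrite /plift ffunE dfwith_in. Qed.
Lemma lift_out i (a : R i) j : i != j -> plift a j = 0.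
Proof. by move=> ne; rewrite /plift ffunE dfwith_out. Qed.

End Helpers.
Arguments plift {n R i}.
Arguments lift_in {n R i}.
Arguments lift_out {n R i}.
Arguments pext {n R}.
Arguments pmulE {n R}.
Arguments p0E {n R}.
Arguments p1E {n R}.

Lemma div_mul_neq0 (A : pzRingType) (a b : A) :
  is_unit a -> b <> 0 -> a * b <> 0.
Proof.
move=> [y [ay ya]] nb ab; apply: nb.
by rewrite -[b]mul1r -ya -mulrA ab mulr0.
Qed.

Lemma unit_rcancel0 (A : pzRingType) (a b : A) :
  is_unit b -> a * b = 0 -> a = 0.
Proof.
move=> [y [by1 yb]] ab.
by rewrite -[a]mulr1 -by1 mulrA ab mul0r.
Qed.

Theorem corollary2p10 (n : nat) (R : 'I_n -> nzRingType) :
  (forall i : 'I_n, left_loc_maximal (R i)) ->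
  ((forall r : prod_ring R, r <> 0 -> left_localizable r) <->
   (forall i : 'I_n, division_ring (R i))).
Proof.
move=> Hmax; split.
- move=> H i; split; first by apply/eqP; exact: oner_neq0.
  move=> x nx.
  have nr : plift x <> 0.
    by move=> e; apply: nx; rewrite -(lift_in x) e p0E.
  have [S [[[[S1 nS0 SM] Ore] Den] Sr]] := H _ nr.
  pose Si := fun a : R i => exists s, S s /\ s i = a.
  have KA : forall s : prod_ring R, s i = 0 -> s * plift x = 0.
    move=> s si; apply: pext => j; rewrite pmulE p0E.
    case: (eqVneq i j) => [<-|ne]; first by rewrite si mul0r.
    by rewrite lift_out // mulr0.
  have Smul : @Defs.multiplicative (R i) Si.
    split.
    + by exists 1; split => //; rewrite p1E.
    + move=> [s [Ss si]]; apply: nS0; rewrite -(KA s si); exact: SM.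
    + move=> a b [s [Ss <-]] [t [St <-]]; exists (s * t); split.
        exact: SM.
      by rewrite pmulE.
  have SiOre : @left_ore (R i) Si.
    split => // a b [s [Ss <-]].
    have [s' [r' [Ss' E]]] := Ore (plift a) s Ss.
    exists (s' i), (r' i); split; first by exists s'.
    by rewrite -(lift_in a) -!pmulE E.
  have SiDen : @left_denominator (R i) Si.
    split => // a b [s [Ss <-]] ab.
    have E : plift a * s = 0.
      apply: pext => j; rewrite pmulE p0E.
      case: (eqVneq i j) => [<-|ne]; first by rewrite lift_in.
      by rewrite lift_out // mul0r.
    have [t [St ta]] := Den _ _ Ss E.
    exists (t i); split; first by exists t.
    by rewrite -(lift_in a) -pmulE ta p0E.
  have [HS0 Hass] := Hmax i.
  apply: HS0; exists Si; split => //; last by exists (plift x); split => //; rewrite lift_in.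
  move=> s Ssi; split.
  + move=> y sy; apply/(Hass _ SiDen); by exists s.
  + move=> y ys; have [t [St ty]] := SiDen.2 _ _ Ssi ys.
    by apply/(Hass _ SiDen); exists t.
- move=> Hd r nr.
  pose S := fun s : prod_ring R => forall j, r j != 0 -> s j != 0.
  pose e : prod_ring R := [ffun j => if r j != 0 then 1 else 0].
  have eS : S e by move=> j rj; rewrite ffunE rj oner_neq0.
  exists S; split; last by move=> j rj; apply/eqP => e0; move/eqP: rj.
  have Smul : Defs.multiplicative S.
    split.
    + by move=> j _; rewrite p1E oner_neq0.
    + move=> S0; apply: nr; apply: pext => j; rewrite p0E.
      apply/eqP; apply: contraT => rj; have := S0 j rj; by rewrite p0E eqxx.
    + move=> s t Ss St j rj; rewrite pmulE; apply/eqP.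
      apply: div_mul_neq0; first by apply: (Hd j).2; apply/eqP; exact: Ss.
      by apply/eqP; exact: St.
  split; first split => //.
  + move=> a s Ss.
    have Hf : forall j, exists y : R j, (s j != 0) ==> ((y * s j == 1)).
      move=> j; case: (boolP (s j != 0)) => sj.
        have [y [_ ys]] := (Hd j).2 _ (elimN eqP sj).
        by exists y; rewrite ys eqxx.
      by exists 0.
    pose f := fun j => xchoose (Hf j).
    exists e, [ffun j => if r j != 0 then a j * f j else 0]; split => //.
    apply: pext => j; rewrite !pmulE !ffunE.
    case: (boolP (r j != 0)) => rj; last by rewrite !mul0r.
    have /implyP/(_ (Ss j rj))/eqP fs := xchooseP (Hf j).
    by rewrite mul1r -mulrA fs mulr1.
  + move=> a s Ss as0; exists e; split => //.
    apply: pext => j; rewrite pmulE ffunE p0E.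
    case: (boolP (r j != 0)) => rj; last by rewrite mul0r.
    rewrite mul1r; apply: (@unit_rcancel0 _ _ (s j)).
      by apply: (Hd j).2; apply/eqP; exact: Ss.
    by rewrite -pmulE as0 p0E.
Qed.
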